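(* For every integer $\ell$ with $\mu_q(n)\le\ell<n$, one has $|\Omega_\ell|<n^{\ell/\mu_q(n)}$.
   Context: Let $q$ be a prime power, $\mathbb{F}=\mathbb{F}_{q^2}$, $G$ a finite abelian group of odd order $n$ with $\gcd(n,q)=1$, and $\mathbb{F}G$ its group algebra. Let $\tau:\mathbb{F}G\to\mathbb{F}G$, $\sum_g\alpha_g g\mapsto\sum_g\alpha_g^q g^{-1}$. Let $e_0=\frac1n\sum_g g$. The primitive idempotents are $e_0$; $e_1,\dots,e_r$ ($\neq e_0$, fixed by $\tau$); and $e_{r+1},\tau(e_{r+1}),\dots,e_{r+s},\tau(e_{r+s})$ (not fixed by $\tau$). Put $\widehat{e}_{r+j}=e_{r+j}+\tau(e_{r+j})$ and $\widehat{E}^\dagger=\{e_1,\dots,e_r,\widehat{e}_{r+1},\dots,\widehat{e}_{r+s}\}$. Let $\mu_q(n)=\min\{\dim_{\mathbb{F}}\mathbb{F}Ge: e\text{ primitive idempotent},\ e\neq e_0\}$. For an integer $\ell$, $\Omega_\ell$ is the set of subspaces $J=\bigoplus_{e\in S}\mathbb{F}Ge$ of $\mathbb{F}G$ with $S\subseteq\widehat{E}^\dagger$ and $\dim_{\mathbb{F}}J=\ell$. *)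

(* Defs.v *)
From HB Require Import structures.
From mathcomp Require Import all_boot all_algebra all_fingroup all_field.

Set Implicit Arguments.
Unset Strict Implicit.
Unset Printing Implicit Defensive.

Import GRing.Theory.
Local Open Scope ring_scope.

(* The group algebra FG of a finite group (the whole finGroupType gT) over a
   field F: elements sum_g a_g g are represented by their coefficient
   functions g |-> a_g.  F^o makes this an F-vector space (vectType F). *)
Definition galg (F : finFieldType) (gT : finGroupType) := {ffun gT -> F^o}.

Section GroupAlgebra.
Variables (F : finFieldType) (gT : finGroupType).
Local Notation FG := (galg F gT).

Definition gmul (a b : FG) : FG :=
  [ffun g => \sum_(h : gT) a h * b (h^-1 * g)%g].

Definition gtau (q : nat) (a : FG) : FG := [ffun g => a (g^-1)%g ^+ q].

Definition ge0 : FG := [ffun => (#|gT|%:R)^-1].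

Definition gidem (e : FG) := (e != 0) && (gmul e e == e).

Definition gprim (e : FG) :=
  gidem e && [forall f1 : FG, forall f2 : FG,
     ~~ [&& gidem f1, gidem f2, gmul f1 f2 == 0, gmul f2 f1 == 0 &
            e == f1 + f2]].

Definition gideal (e : FG) : {vspace FG} :=
  <<[seq gmul x e | x <- enum {: FG}]>>%VS.

Definition Ehat (q : nat) : {set FG} :=
  [set e | [&& gprim e, e != ge0 & gtau q e == e]] :|:
  ((fun e : FG => e + gtau q e) @: [set e : FG | gprim e & gtau q e != e]).

Definition mu_q : nat :=
  \big[minn/#|gT|]_(e : FG | gprim e && (e != ge0)) \dim (gideal e).

Definition Jsum (S : {set FG}) : {vspace FG} := (\sum_(e in S) gideal e)%VS.

(* Omega_l, each subspace J represented by its set of elements *)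
Definition Omega (q l : nat) : {set {set FG}} :=
  [set [set x | x \in Jsum S] |
     S in [set S : {set FG} | (S \subset Ehat q) && (\dim (Jsum S) == l)]].

End GroupAlgebra.

(* Main.v *)
Require Import Defs.
From HB Require Import structures.
From mathcomp Require Import all_boot all_algebra all_fingroup all_field.
Set Implicit Arguments.
Unset Strict Implicit.
Unset Printing Implicit Defensive.
Import GRing.Theory.
Lemma bigmin_le_nat (I : eqType) (r : seq I) (P : pred I) (G : I -> nat) x e :
  e \in r -> P e -> \big[minn/x]_(i <- r | P i) G i <= G e.
Proof.
elim: r => // a r IH; rewrite inE big_cons => /orP[/eqP<-|er] Pe.
  by rewrite Pe geq_minl.
case: (P a); last exact: IH.
exact: leq_trans (geq_minr _ _) (IH er Pe).
Qed.

Lemma exp_mono a b m : (a <= b) -> (a ^ m <= b ^ m).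
Proof. by move=> ab; elim: m => // m IH; rewrite !expnS leq_mul. Qed.

Lemma bin_le_exp N k : ('C(N, k) <= N ^ k).
Proof.
apply: (@leq_trans (N ^_ k)).
  by rewrite -bin_ffact leq_pmulr // fact_gt0.
elim: k => [|k IH] //; rewrite ffactnSr expnSr; apply: leq_mul => //; apply: leq_subr.
Qed.

Lemma card_small_subsets (T : finType) (E : {set T}) m :
  (#|[set S : {set T} | S \subset E & #|S| <= m]| <= (#|E|.+1) ^ m).
Proof.
elim: m => [|m IH].
  rewrite expn0 -(cards1 (@set0 T)); apply: subset_leq_card.
  by apply/subsetP => S; rewrite !inE leqn0 cards_eq0 => /andP[_ ->].
apply: (@leq_trans (#|[set S : {set T} | S \subset E & #|S| <= m]| +
                    #|[set S : {set T} | S \subset E & #|S| == m.+1]|)).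
  apply: leq_trans (leq_card_setU _ _); apply: subset_leq_card.
  apply/subsetP => S; rewrite !inE => /andP[-> c].
  by rewrite -ltnS ltn_neqAle c andbT /=; case: eqP.
rewrite cards_draws expnS mulSn leq_add //.
apply: leq_trans (bin_le_exp _ _) _.
by rewrite expnS leq_mul // exp_mono.
Qed.


Section Alg.
Local Open Scope ring_scope.
Variables (F : finFieldType) (gT : finGroupType).
Local Notation FG := (galg F gT).
Implicit Types a b c e f x : FG.

Lemma gmulE a b g : gmul a b g = \sum_(h : gT) a h * b (h^-1 * g)%g.
Proof. by rewrite ffunE. Qed.

Lemma gmulDl a b c : gmul (a + b) c = gmul a c + gmul b c.
Proof.
apply/ffunP => g; rewrite !ffunE -big_split; apply: eq_bigr => h _.
by rewrite ffunE mulrDl.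
Qed.

Lemma gmulZl k a c : gmul (k *: a) c = k *: gmul a c.
Proof.
apply/ffunP => g; rewrite !ffunE scaler_sumr; apply: eq_bigr => h _.
by rewrite ffunE /GRing.scale /= mulrA.
Qed.

Lemma gmul0l c : gmul 0 c = 0.
Proof. by apply/ffunP => g; rewrite !ffunE big1 // => h _; rewrite ffunE mul0r. Qed.

Lemma gmulNl a c : gmul (- a) c = - gmul a c.
Proof. by apply/eqP; rewrite -subr_eq0 opprK -gmulDl addNr gmul0l. Qed.

Lemma gmulA a b c : gmul a (gmul b c) = gmul (gmul a b) c.
Proof.
apply/ffunP => g; rewrite !ffunE.
under [RHS]eq_bigr do rewrite ffunE mulr_suml.
rewrite exchange_big /=; apply: eq_bigr => k _.
rewrite ffunE mulr_sumr.
rewrite [RHS](reindex_inj (mulgI k)) /=; apply: eq_bigr => h _.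
by rewrite mulrA mulKg invMg mulgA.
Qed.

Lemma dim_full : \dim (fullv : {vspace FG}) = #|gT|.
Proof. rewrite dimvf. by rewrite /dim /= muln1. Qed.


Section Comm.
Hypothesis hab : abelian [set: gT].

Lemma gcomm (x y : gT) : (x * y = y * x)%g.
Proof. by move: hab; rewrite abelianE => /centsP/(_ x (in_setT x) y (in_setT y)). Qed.

Lemma gmulC a b : gmul a b = gmul b a.
Proof.
apply/ffunP => g; rewrite !ffunE.
rewrite [RHS](reindex_inj (mulgI g)) [RHS](reindex_inj invg_inj) /=.
apply: eq_bigr => h _; by rewrite mulrC invMg invgK mulgKV gcomm.
Qed.

Lemma gmulDr a b c : gmul c (a + b) = gmul c a + gmul c b.
Proof. by rewrite !(gmulC c) gmulDl. Qed.
Lemma gmul0r c : gmul c 0 = 0.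
Proof. by rewrite gmulC gmul0l. Qed.
Lemma gmulNr a c : gmul c (- a) = - gmul c a.
Proof. by rewrite !(gmulC c) gmulNl. Qed.
Lemma gmulBl a b c : gmul (a - b) c = gmul a c - gmul b c.
Proof. by rewrite gmulDl gmulNl. Qed.
Lemma gmulBr a b c : gmul c (a - b) = gmul c a - gmul c b.
Proof. by rewrite gmulDr gmulNr. Qed.


Variable q : nat.
Hypothesis q0 : (0 < q)%N.
Hypothesis frobD : forall x y : F, (x + y) ^+ q = x ^+ q + y ^+ q.
Hypothesis frobK : forall x : F, x ^+ q ^+ q = x.
Hypothesis hn : (#|gT|%:R : F) != 0.
Local Notation tau := (@gtau F gT q).
Local Notation e0 := (@ge0 F gT).

Lemma frob_sum (I : finType) (P : pred I) (G : I -> F) :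
  (\sum_(i | P i) G i) ^+ q = \sum_(i | P i) G i ^+ q.
Proof. by apply: (big_morph (fun x : F => x ^+ q) frobD); rewrite expr0n eqn0Ngt q0. Qed.

Lemma frob_nat m : (m%:R : F) ^+ q = m%:R.
Proof. by elim: m => [|m IH]; rewrite ?expr0n ?eqn0Ngt ?q0 // mulrS frobD IH expr1n addrC. Qed.

Lemma tauE a g : tau a g = a (g^-1)%g ^+ q.
Proof. by rewrite ffunE. Qed.

Lemma tauD a b : tau (a + b) = tau a + tau b.
Proof. by apply/ffunP => g; rewrite !ffunE frobD. Qed.

Lemma tau0 : tau 0 = 0.
Proof. by apply/ffunP => g; rewrite !ffunE expr0n eqn0Ngt q0. Qed.

Lemma tauK a : tau (tau a) = a.
Proof. by apply/ffunP => g; rewrite !ffunE invgK frobK. Qed.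

Lemma tau_inj : injective (tau).
Proof. exact: can_inj tauK. Qed.

Lemma tau_e0 : tau e0 = ge0 F gT.
Proof. by apply/ffunP => g; rewrite !ffunE exprVn frob_nat. Qed.

Lemma tauM a b : tau (gmul a b) = gmul (tau a) (tau b).
Proof.
apply/ffunP => g; rewrite !ffunE frob_sum.
rewrite [RHS](reindex_inj invg_inj) /=; apply: eq_bigr => h _.
by rewrite !ffunE exprMn invgK invMg gcomm.
Qed.


Lemma prim_idem e : gprim e -> gmul e e = e /\ e != 0.
Proof. by case/andP => /andP[nz /eqP ee] _. Qed.

Lemma prim_split e f1 f2 : gprim e -> gmul f1 f1 = f1 -> gmul f2 f2 = f2 ->
  gmul f1 f2 = 0 -> e = f1 + f2 -> f1 = 0 \/ f2 = 0.
Proof.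
move=> /andP[_ /forallP/(_ f1)/forallP/(_ f2)] /negP H H1 H2 H12 He.
have H21 : gmul f2 f1 = 0 by rewrite gmulC.
case: (eqVneq f1 0) => [->|n1]; first by left.
case: (eqVneq f2 0) => [->|n2]; first by right.
by exfalso; apply: H; rewrite /gidem n1 n2 H1 H2 H12 H21 He !eqxx.
Qed.

Lemma idem_mul e f : gmul e e = e -> gmul f f = f ->
  gmul (gmul e f) (gmul e f) = gmul e f.
Proof.
move=> ee ff; rewrite gmulA -[gmul (gmul e f) e]gmulC gmulA ee.
by rewrite -gmulA ff.
Qed.

Lemma prim_orth e f : gprim e -> gprim f -> e != f -> gmul e f = 0.
Proof.
have key : forall e f, gprim e -> gprim f -> gmul e f = 0 \/ gmul e f = e.
  move=> a b pa pb; have [aa _] := prim_idem pa; have [bb _] := prim_idem pb.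
  have hab2 := idem_mul aa bb.
  have h1 : gmul a (gmul a b) = gmul a b by rewrite gmulA aa.
  have h2 : gmul (gmul a b) a = gmul a b by rewrite gmulC h1.
  have s1 : gmul (a - gmul a b) (a - gmul a b) = a - gmul a b.
    by rewrite gmulBl !gmulBr aa h1 h2 hab2 subrr subr0.
  have s2 : gmul (gmul a b) (a - gmul a b) = 0 by rewrite gmulBr h2 hab2 subrr.
  have s3 : a = gmul a b + (a - gmul a b) by rewrite addrC subrK.
  have [->|H] := prim_split pa hab2 s1 s2 s3; first by left.
  by right; apply/eqP; rewrite eq_sym -subr_eq0 H.
move=> pe pf nef.
case: (key e f pe pf) => // H1.
case: (key f e pf pe) => [|H2]; first by rewrite gmulC.
by move: nef; rewrite -H1 -{2}H2 gmulC eqxx.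
Qed.

Lemma gmul_e0 x : gmul e0 x = (\sum_h x h) *: e0.
Proof.
apply/ffunP => g; rewrite !ffunE /GRing.scale /= mulr_suml.
rewrite [LHS](reindex_inj (mulgI g)) [LHS](reindex_inj invg_inj) /=.
apply: eq_bigr => h _; rewrite !ffunE mulrC; congr (_ * _).
by rewrite invMg invgK mulgKV.
Qed.

Lemma e0_neq0 : e0 != 0.
Proof.
apply/eqP => /ffunP/(_ 1%g); rewrite !ffunE => /eqP.
by rewrite invr_eq0 (negPf hn).
Qed.

Lemma e0_idem : gmul e0 e0 = e0.
Proof.
rewrite gmul_e0; under eq_bigr do rewrite ffunE.
rewrite sumr_const; have ->: (#|gT|%:R^-1 *+ #|gT| : F) = 1.
  by rewrite -[_ *+ #|gT|]mulr_natr mulVf.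
by rewrite scale1r.
Qed.

Lemma prim_e0 e : gprim e -> e != e0 -> gmul e0 e = 0.
Proof.
move=> pe ne; have [ee _] := prim_idem pe.
set c := \sum_h e h.
have ec : gmul e0 e = c *: e0 by rewrite gmul_e0.
have cc : c * c = c.
  have := gmulA e0 e e; rewrite ee ec gmulZl ec scalerA => /eqP.
  by rewrite eq_sym -subr_eq0 -scalerBl scaler_eq0 (negPf e0_neq0) orbF subr_eq0 => /eqP.
have : c * (c - 1) = 0 by rewrite mulrBr cc mulr1 subrr.
move/eqP; rewrite mulf_eq0 => /orP[/eqP c0|].
  by rewrite ec c0 scale0r.
rewrite subr_eq0 => /eqP c1; exfalso.
have e0e : gmul e0 e = e0 by rewrite ec c1 scale1r.
have e0e' : gmul e e0 = e0 by rewrite gmulC.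
have s1 : gmul (e - e0) (e - e0) = e - e0.
  by rewrite gmulBl !gmulBr ee e0e e0e' e0_idem subrr subr0.
have s2 : gmul e0 (e - e0) = 0 by rewrite gmulBr e0e e0_idem subrr.
have s3 : e = e0 + (e - e0) by rewrite addrC subrK.
have [H|H] := prim_split pe e0_idem s1 s2 s3.
  by move: e0_neq0; rewrite H eqxx.
by move: ne; rewrite -subr_eq0 H eqxx.
Qed.

Lemma tau_prim e : gprim e -> gprim (tau e).
Proof.
move=> pe; have [ee ne] := prim_idem pe.
apply/andP; split.
  rewrite /gidem -tauM ee eqxx andbT; apply: contra ne => /eqP H.
  by apply/eqP; apply: tau_inj; rewrite H tau0.
apply/forallP => f1; apply/forallP => f2; apply/negP.
case/and5P => /andP[n1 /eqP i1] /andP[n2 /eqP i2] /eqP o1 _ /eqP E.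
have j1 : gmul (tau f1) (tau f1) = tau f1 by rewrite -tauM i1.
have j2 : gmul (tau f2) (tau f2) = tau f2 by rewrite -tauM i2.
have k : gmul (tau f1) (tau f2) = 0 by rewrite -tauM o1 tau0.
have E' : e = tau f1 + tau f2 by rewrite -tauD -E tauK.
case: (prim_split pe j1 j2 k E') => /eqP; rewrite -tau0 (inj_eq tau_inj).
  by rewrite (negPf n1).
by rewrite (negPf n2).
Qed.

Lemma EhatP x : x \in @Ehat F gT q ->
  (gprim x /\ x != e0 /\ tau x = x) \/
  (exists e, [/\ gprim e, tau e != e & x = e + tau e]).
Proof.
case/setUP.
  by rewrite inE => /and3P[p n /eqP t]; left.
by case/imsetP => e; rewrite inE => /andP[p t] ->; right; exists e.
Qed.

Lemma Ehat_prop x : x \in @Ehat F gT q ->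
  [/\ gmul x x = x, x != 0, gmul e0 x = 0 &
      exists2 e, gprim e && (e != e0) & gmul x e = e].
Proof.
case/EhatP => [[p [n t]]|[e [pe nt ->]]].
  have [xx nx] := prim_idem p; split => //; first exact: prim_e0.
  by exists x => //; rewrite p n.
have pe' := tau_prim pe; have [ee nze] := prim_idem pe.
have [tt _] := prim_idem pe'.
have ne0 : e != e0 by apply: contra nt => /eqP ->; rewrite tau_e0.
have nt0 : tau e != e0.
  by apply: contra nt => /eqP E; rewrite E -[e]tauK E tau_e0.
have o : gmul e (tau e) = 0 by apply: prim_orth; rewrite // eq_sym.
have o' : gmul (tau e) e = 0 by rewrite gmulC.
have xe : gmul (e + tau e) e = e by rewrite gmulDl ee o' addr0.
split.
- by rewrite gmulDl !gmulDr ee o o' tt addr0 add0r.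
- by apply: contra nze => /eqP x0; rewrite -xe x0 gmul0l.
- by rewrite gmulDr !prim_e0 ?addr0.
- by exists e => //; rewrite pe ne0.
Qed.

Lemma Ehat_orth x y : x \in @Ehat F gT q -> y \in @Ehat F gT q -> x != y ->
  gmul x y = 0.
Proof.
have tprim := tau_prim.
have mix : forall x f, gprim x -> tau x = x -> gprim f -> tau f != f ->
    gmul x (f + tau f) = 0.
  move=> a f pa ta pf tf.
  have h1 : a != f by apply: contra tf => /eqP <-; rewrite ta.
  have h2 : a != tau f.
    by apply: contra tf => /eqP E; rewrite -E -ta E tauK.
  by rewrite gmulDr !prim_orth ?addr0 // tprim.
case/EhatP => [[px [nx tx]]|[e [pe te ->]]];
  case/EhatP => [[py [ny ty]]|[f [pf tf ->]]] nxy.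
- exact: prim_orth.
- exact: mix.
- by rewrite gmulC mix.
have h1 : e != f by apply: contra nxy => /eqP ->.
have h2 : e != tau f by apply: contra nxy => /eqP ->; rewrite tauK addrC.
have h3 : tau e != f by apply: contra nxy => /eqP <-; rewrite tauK addrC.
have h4 : tau e != tau f by apply: contra h1 => /eqP /tau_inj ->.
by rewrite gmulDl !gmulDr !prim_orth ?tprim // !addr0.
Qed.

Definition lin_of (f : FG -> FG) (hf : linear f) : {linear FG -> FG} :=
  HB.pack f (GRing.isLinear.Build _ _ _ _ f hf).

Definition kerv (f : FG -> FG) (hf : linear f) : {vspace FG} :=
  lker (linfun (lin_of hf)).

Lemma mem_kerv (f : FG -> FG) (hf : linear f) v : (v \in kerv hf) = (f v == 0).
Proof. by rewrite memv_ker lfunE. Qed.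

Lemma rmul_lin e : linear (fun x => gmul x e).
Proof. by move=> a u v; rewrite gmulDl gmulZl. Qed.

Lemma rfix_lin e : linear (fun x => gmul x e - x).
Proof.
move=> a u v; rewrite gmulDl gmulZl scalerBr.
by rewrite addrACA opprD addrA.
Qed.

Lemma gideal_fix e v : gmul e e = e -> v \in gideal e -> gmul v e = v.
Proof.
move=> ee; have : (gideal e <= kerv (rfix_lin e))%VS.
  apply/span_subvP => y /mapP[x _ ->].
  by rewrite mem_kerv -gmulA ee subrr.
by move/subvP => H /H; rewrite mem_kerv subr_eq0 => /eqP.
Qed.

Lemma gideal_ann e f : gmul f e = 0 -> (gideal f <= kerv (rmul_lin e))%VS.
Proof.
move=> fe; apply/span_subvP => y /mapP[x _ ->].
by rewrite mem_kerv -gmulA fe gmul0r.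
Qed.

Lemma Jsum_ann (S : {set FG}) e v : (forall f, f \in S -> gmul f e = 0) ->
  v \in Jsum S -> gmul v e = 0.
Proof.
move=> H; have : (Jsum S <= kerv (rmul_lin e))%VS.
  by apply/subv_sumP => f fS; apply: gideal_ann; apply: H.
by move/subvP => K /K; rewrite mem_kerv => /eqP.
Qed.

Lemma idem_in e : gmul e e = e -> e \in gideal e.
Proof.
move=> ee; rewrite -{1}ee; apply: memv_span.
by apply: map_f; rewrite mem_enum memvf.
Qed.

Lemma dim_gideal_gt0 e : gmul e e = e -> e != 0 -> (0 < \dim (gideal e))%N.
Proof.
move=> ee ne; rewrite lt0n dimv_eq0; apply: contra ne => /eqP H.
by have := idem_in ee; rewrite H memv0.
Qed.

Lemma dim_Jsum d (S : {set FG}) :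
  (forall x, x \in S -> gmul x x = x /\ (d <= \dim (gideal x))%N) ->
  {in S &, forall x y, x != y -> gmul x y = 0} ->
  (#|S| * d <= \dim (Jsum S))%N.
Proof.
have [k cS] : exists k, #|S| = k by exists #|S|.
elim: k S cS => [|k IH] S cS HS HO; rewrite cS; first by rewrite mul0n.
have [x xS] : exists x, x \in S.
  by apply/set0Pn; rewrite -card_gt0 cS.
have [xx dx] := HS x xS.
rewrite /Jsum (big_setD1 x xS) /=.
have cap : (gideal x :&: \sum_(i in S :\ x) gideal i)%VS = 0%VS.
  apply/eqP; rewrite -subv0; apply/subvP => v; rewrite memv_cap memv0.
  case/andP => vx vs.
  have := gideal_fix xx vx => <-.
  apply/eqP; apply: (@Jsum_ann (S :\ x)) vs => f; rewrite !inE => /andP[nfx fS].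
  by apply: HO.
have := dimv_sum_cap (gideal x) (\sum_(i in S :\ x) gideal i)%VS.
rewrite cap dimv0 addn0 => ->.
have ck : #|S :\ x| = k by apply/eqP; rewrite -eqSS -cS (cardsD1 x S) xS.
rewrite mulSn; apply: leq_add dx _; rewrite -ck; apply: IH => //.
- by move=> y; rewrite inE => /andP[_ /HS].
- by move=> y z; rewrite !inE => /andP[_ yS] /andP[_ zS]; apply: HO.
Qed.

Lemma gideal_sub e x : gmul x e = e -> (gideal e <= gideal x)%VS.
Proof.
move=> xe; apply/span_subvP => y /mapP[z _ ->].
rewrite -{1}xe [gmul x e]gmulC gmulA; apply: memv_span.
by apply: map_f; rewrite mem_enum memvf.
Qed.

End Comm.
End Alg.


Theorem lemma3p12 (q : nat) (F : finFieldType) (gT : finGroupType) (l : nat) :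
  (exists p k, [/\ prime p, 0 < k & q = p ^ k]) ->
  #|F| = q ^ 2 ->
  abelian [set: gT] ->
  odd #|gT| ->
  coprime #|gT| q ->
  1 < #|gT| ->
  @mu_q F gT <= l < #|gT| ->
  #|@Omega F gT q l| ^ @mu_q F gT < #|gT| ^ l.
Proof.
move=> [p [k [pp k0 qE]]] cardF hab _ hcop hn1 /andP[mul ln].
have q0 : 0 < q by rewrite qE expn_gt0 prime_gt0.
have pc : p \in [pchar F]%R.
  by apply: (@card_finPcharP _ p (k * 2)) => //; rewrite cardF qE -expnM.
have frobD (x y : F) : ((x + y) ^+ q = x ^+ q + y ^+ q)%R.
  by rewrite qE exprDn_pchar // pnatX pnatE // pc.
have frobK (x : F) : (x ^+ q ^+ q)%R = x.
  by rewrite -exprM mulnn -cardF expf_card.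
have hnF : (#|gT|%:R : F)%R != 0%R.
  rewrite -(dvdn_pcharf pc) -prime_coprime // coprime_sym.
  by rewrite -(coprime_pexpr _ _ k0) -qE.
have mu_le e : gprim e -> e != ge0 F gT -> mu_q F gT <= \dim (gideal e).
  move=> pe ne; rewrite /mu_q; apply: bigmin_le_nat; last by rewrite pe ne.
  exact: mem_index_enum.
have mu_pos : 0 < mu_q F gT.
  rewrite /mu_q; apply: (big_ind (fun m => 0 < m)) => //.
  - exact: ltnW.
  - by move=> a b a0 b0; rewrite leq_min a0 b0.
  - move=> e /andP[pe _]; have [ee ne] := prim_idem pe.
    exact: dim_gideal_gt0.
set E := Ehat F gT q.
have e0E : ge0 F gT \notin E.
  apply/negP => /(Ehat_prop hab q0 frobD frobK hnF) [_ _ h _].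
  by move: (e0_neq0 hnF); rewrite -{1}(e0_idem hnF) h eqxx.
have cardE : #|E| < #|gT|.
  have := @dim_Jsum F gT hab 1 (ge0 F gT |: E).
  rewrite muln1 cardsU1 e0E => H.
  rewrite -(dim_full F gT); apply: leq_trans (dimvS (subvf _)).
  apply: H.
    move=> x /setU1P [->|xE].
      by split; [exact: e0_idem | apply: dim_gideal_gt0 (e0_idem hnF) (e0_neq0 hnF)].
    have [xx nx _ _] := Ehat_prop hab q0 frobD frobK hnF xE.
    by split => //; apply: dim_gideal_gt0.
  move=> x y /setU1P [->|xE] /setU1P [->|yE] nxy.
  - by rewrite eqxx in nxy.
  - by have [_ _ -> _] := Ehat_prop hab q0 frobD frobK hnF yE.
  - by have [_ _ h _] := Ehat_prop hab q0 frobD frobK hnF xE; rewrite gmulC.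
  - exact: (Ehat_orth hab q0 frobD frobK).
have keyS (S : {set galg F gT}) : S \subset E -> #|S| * mu_q F gT <= \dim (Jsum S).
  move=> sSE; apply: dim_Jsum => //.
    move=> x /(subsetP sSE) xE.
    have [xx _ _ [e /andP[pe ne] xe]] := Ehat_prop hab q0 frobD frobK hnF xE.
    split => //; apply: leq_trans (mu_le e pe ne) _.
    exact/dimvS/gideal_sub.
  move=> x y /(subsetP sSE) xE /(subsetP sSE) yE.
  exact: (Ehat_orth hab q0 frobD frobK).
set m := l %/ mu_q F gT.
have hA : [set S : {set galg F gT} | (S \subset E) && (\dim (Jsum S) == l)]
    \subset [set S : {set galg F gT} | S \subset E & #|S| <= m] :\ set0.
  apply/subsetP => S; rewrite !inE => /andP[sSE /eqP dS].
  rewrite sSE; apply/andP; split.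
    apply: contraTneq mul => S0; rewrite -ltnNge -dS S0 /Jsum big_set0 dimv0.
    by [].
  by rewrite leq_divRL // -dS keyS.
have cnt : #|Omega F gT q l| < #|gT| ^ m.
  apply: leq_ltn_trans (leq_imset_card _ _) _.
  apply: leq_ltn_trans (subset_leq_card hA) _.
  have := card_small_subsets E m.
  rewrite (cardsD1 set0) !inE sub0set cards0 /= add1n => H.
  apply: leq_trans H _; exact: exp_mono.
apply: (@leq_trans ((#|gT| ^ m) ^ mu_q F gT)); first by rewrite ltn_exp2r.
rewrite -expnM; apply: leq_pexp2l; first exact: ltnW.
exact: leq_divM.
Qed.
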